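(* Let $\Lambda\colon L\times W\to[0,\infty]$ be a Dowker dissimilarity with a triangle relation $T$, let $\beta\colon[0,\infty]\to[0,\infty]$ be order preserving with $\lim_{t\to\infty}\beta(t)=\infty$, and let $\lambda$ be a $T$-insertion function for $\Lambda$ of resolution at most $\beta$. If $\alpha\colon[0,\infty]\to[0,\infty]$ is order preserving with $\alpha(t)\ge t+\beta(t)+\sup\Lambda(T)$ for all $t\in[0,\infty]$, then $\Delta_L$ is a morphism $\Lambda\to\alpha^*\Lambda^{(\lambda,\alpha,\beta)}$ of Dowker dissimilarities; that is, for every $t\in[0,\infty]$, every $\sigma\in N\Lambda_t$ lies in $N\Lambda^{(\lambda,\alpha,\beta)}_{\alpha(t)}$.
   Context: A Dowker dissimilarity is a function $\Lambda\colon L\times W\to[0,\infty]$; $N\Lambda_t=\{\text{finite }\sigma\subseteq L\mid\exists w\in W:\Lambda(l,w)<t\ \forall l\in\sigma\}$. A triangle relation for $\Lambda$ is a relation $T\subseteq L\times W$ such that for every $w\in W$ there is $l\in L$ with $(l,w)\in T$, and for all $(l,w)\in T$ and $(l',w')\in L\times W$: $\Lambda(l',w')\le\Lambda(l',w)+\Lambda(l,w')+\Lambda(l,w)$. $\sup\Lambda(T)=\sup\{\Lambda(l,w)\mid(l,w)\in T\}$. A $T$-insertion function for $\Lambda$ of resolution at most $\beta$ is a function $\lambda\colon W\to[0,\infty]$ such that for every $t\in[0,\infty]$ and every $(l,w)\in T$ there exists $w_0\in W$ with $\Lambda(l,w_0)\le\beta(t)<\lambda(w_0)$. The generalized inverse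 is $\beta^{\leftarrow}(s)=\inf\{t\in[0,\infty]\mid\beta(t)\ge s\}$. The $(\lambda,\alpha,\beta)$-truncation of $\Lambda$ is $\Lambda^{(\lambda,\alpha,\beta)}(l,w)=\Lambda(l,w)$ if $\Lambda(l,w)\le\alpha(\beta^{\leftarrow}(\lambda(w)))$ and $=\infty$ otherwise. *)

(* Defs.v *)
From HB Require Import structures.
From mathcomp Require Import all_boot all_order all_algebra.
From mathcomp Require Import all_classical all_reals.
From mathcomp Require Import ereal topology normedtype sequences.
Set Implicit Arguments. Unset Strict Implicit. Unset Printing Implicit Defensive.
Import Order.TTheory GRing.Theory Num.Theory.
Local Open Scope classical_set_scope.
Local Open Scope ereal_scope.

(* [0,oo] is modelled as the nonnegative part of \bar R. *)

Definition dowker_dissim {R : realType} {L W : Type} (Lam : L -> W -> \bar R) :=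
  forall l w, 0 <= Lam l w.

Definition nerve {R : realType} {L W : Type} (Lam : L -> W -> \bar R) (t : \bar R)
  : set (set L) :=
  [set sigma | finite_set sigma /\ exists w, forall l, sigma l -> Lam l w < t].

Definition triangle_relation {R : realType} {L W : Type}
  (Lam : L -> W -> \bar R) (T : L -> W -> Prop) :=
  (forall w, exists l, T l w) /\
  (forall l w l' w', T l w -> Lam l' w' <= Lam l' w + Lam l w' + Lam l w).

(* supremum taken in [0,oo] (so the empty sup is 0) *)
Definition supT {R : realType} {L W : Type} (Lam : L -> W -> \bar R) (T : L -> W -> Prop)
  : \bar R :=
  ereal_sup ([set 0] `|` [set Lam p.1 p.2 | p in [set p : L * W | T p.1 p.2]]).

Definition order_preserving {R : realType} (f : \bar R -> \bar R) :=
  (forall x, 0 <= x -> 0 <= f x) /\ (forall x y, 0 <= x -> x <= y -> f x <= f y).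

Definition insertion_function {R : realType} {L W : Type} (Lam : L -> W -> \bar R)
  (T : L -> W -> Prop) (beta : \bar R -> \bar R) (lam : W -> \bar R) :=
  (forall w, 0 <= lam w) /\
  (forall (t : R), (0 <= t)%R -> forall l w, T l w ->
     exists w0, Lam l w0 <= beta t%:E /\ beta t%:E < lam w0).

Definition gen_inv {R : realType} (beta : \bar R -> \bar R) (s : \bar R) : \bar R :=
  ereal_inf [set t | 0 <= t /\ s <= beta t].

Definition truncation {R : realType} {L W : Type} (Lam : L -> W -> \bar R)
  (lam : W -> \bar R) (alpha beta : \bar R -> \bar R) : L -> W -> \bar R :=
  fun l w => if (Lam l w <= alpha (gen_inv beta (lam w)))%E then Lam l w else +oo.

(* Main.v *)
Require Import Defs.
From HB Require Import structures.
From mathcomp Require Import all_boot all_order all_algebra.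
From mathcomp Require Import all_classical all_reals.
From mathcomp Require Import ereal topology normedtype sequences.
From mathcomp Require Import lra.
Import Order.TTheory GRing.Theory Num.Theory.
Local Open Scope classical_set_scope.
Local Open Scope ereal_scope.

Lemma seq_bound_aux (R : realType) (s : seq (\bar R)) :
  (forall x, x \in s -> x < +oo) ->
  exists r : R, (0 <= r)%R /\ forall x, x \in s -> x < r%:E.
Proof.
elim: s => [|a s IH] H.
  by exists 0%R; split => // x.
have [r [r0 Hr]] : exists r : R, (0 <= r)%R /\ forall x, x \in s -> x < r%:E.
  by apply: IH => x xs; apply: H; rewrite inE xs orbT.
have ha : a < +oo by apply: H; rewrite inE eqxx.
exists (r + `|fine a| + 1)%R; split.
  by rewrite addr_ge0 // addr_ge0.
move=> x; rewrite inE => /orP [/eqP ->|xs].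
  clear H Hr; move: ha; case: a => [a'| |] //= _.
  rewrite lte_fin; have := ler_norm a'; lra.
  by rewrite ltNyr.
apply: lt_le_trans (Hr x xs) _; rewrite lee_fin.
have := normr_ge0 (fine a); lra.
Qed.

Theorem lemma9p4 (R : realType) (L W : Type) (Lam : L -> W -> \bar R)
  (T : L -> W -> Prop) (beta alpha : \bar R -> \bar R) (lam : W -> \bar R) :
  dowker_dissim Lam ->
  triangle_relation Lam T ->
  order_preserving beta ->
  (fun t : R => beta t%:E) @ +oo%R --> +oo ->
  insertion_function Lam T beta lam ->
  order_preserving alpha ->
  (forall t, 0 <= t -> t + beta t + supT Lam T <= alpha t) ->
  forall t, 0 <= t ->
    forall sigma, nerve Lam t sigma ->
      nerve (truncation Lam lam alpha beta) (alpha t) sigma.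
Proof.
move=> Hd [HTw Htri] [Hb0 Hbm] _ [Hl0 Hins] [Ha0 Ham] Hab t t0 sigma [fs [w Hw]].
split => //.
have supT0 : 0 <= supT Lam T by apply: ereal_sup_ubound; left.
have gi0 : forall s, 0 <= gen_inv beta s.
  by move=> s; apply: le_ereal_inf_tmp => x [].
have neqNy : forall x : \bar R, 0 <= x -> x != -oo by case.
have [supinf|supfin] := boolP (supT Lam T == +oo).
  exists w => l sl; rewrite /truncation.
  have -> : alpha (gen_inv beta (lam w)) = +oo.
    apply/eqP; rewrite eq_le leey /=.
    apply: le_trans (Hab _ (gi0 _)).
    rewrite (eqP supinf) addey //.
    by apply: neqNy; rewrite adde_ge0 // ?gi0 // Hb0 // gi0.
  rewrite leey; apply: lt_le_trans (Hw l sl) _.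
  have := Hab t t0; apply: le_trans.
  rewrite (eqP supinf) addey ?leey //.
  by apply: neqNy; rewrite adde_ge0 // Hb0.
have supfn : supT Lam T \is a fin_num.
  by rewrite ge0_fin_numE // ltey.
have [r [r0 [Hr rt]]] : exists r : R, (0 <= r)%R /\
    (forall l, sigma l -> Lam l w < r%:E) /\ r%:E <= t.
  move: t0 Hw; case: t => [t'| |] //= t0 Hw.
    by exists t'; split => //; rewrite -lee_fin.
  have fi : finite_set ((fun l => Lam l w) @` sigma) by apply: finite_image.
  have [s hs] := (finite_seqP _).1 fi.
  have [r [r0 Hr]] : exists r : R, (0 <= r)%R /\ forall x, x \in s -> x < r%:E.
    apply: seq_bound_aux => x xs.
    have : [set` s] x by [].
    by rewrite -hs => -[l sl <-]; apply: Hw.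
  exists r; split => //; split; last by rewrite leey.
  move=> l sl; apply: Hr.
  have : [set` s] (Lam l w) by rewrite -hs; exists l.
  by [].
have [l0 Tl0] := HTw w.
have [w0 [H1 H2]] := Hins r r0 l0 w Tl0.
exists w0 => l sl.
have gi : r%:E <= gen_inv beta (lam w0).
  apply: le_ereal_inf_tmp => s [s0 hs].
  rewrite leNgt; apply/negP => sr.
  have := Hbm _ _ s0 (ltW sr).
  move=> hb; have := le_lt_trans (le_trans hs hb) H2.
  by rewrite ltxx.
have bfin : beta r%:E \is a fin_num.
  by rewrite ge0_fin_numE ?Hb0 // (lt_le_trans H2) ?leey.
have la : Lam l w0 < alpha r%:E.
  apply: le_lt_trans (Htri l0 w l w0 Tl0) _.
  apply: lt_le_trans (Hab _ _); last by rewrite lee_fin.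
  have l0f : Lam l0 w0 \is a fin_num.
    by rewrite ge0_fin_numE ?Hd // (le_lt_trans H1) // ltey_eq bfin.
  have l0wf : Lam l0 w \is a fin_num.
    rewrite ge0_fin_numE ?Hd //; apply: (le_lt_trans (y := supT Lam T)).
      by apply: ereal_sup_ubound; right; exists (l0, w).
    by rewrite ltey.
  apply: lte_leD => //.
  apply: lte_leD => //.
  exact: Hr.
  by apply: ereal_sup_ubound; right; exists (l0, w).
rewrite /truncation ifT.
  by apply: lt_le_trans la _; apply: Ham => //; rewrite lee_fin.
have -> : Lam l w0 <= alpha (gen_inv beta (lam w0)).
  by apply: le_trans (ltW la) (Ham _ _ _ gi); rewrite lee_fin.
by [].
Qed.
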